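(* Let $M\geq N\geq 1$ and let $\rho=\epsilon\,|\psi\rangle\langle\psi|+\frac{1-\epsilon}{MN}I$ be a state on $\mathbb{C}^M\otimes\mathbb{C}^N$, where $0<\epsilon\leq 1$ and $|\psi\rangle$ is a unit vector with Schmidt decomposition $|\psi\rangle=\sum_{k=0}^{N-1}a_k|k\rangle_A\otimes|k\rangle_B$ ($a_k\geq 0$, $\sum_k a_k^2=1$). Let $a_m=\max_k a_k$. Then $$d_{\max}(\rho)=\begin{cases}\epsilon & \text{if } a_m^2\leq \tfrac12,\\ 2\epsilon\, a_m\sqrt{1-a_m^2} & \text{otherwise.}\end{cases}$$
   Context: For a state $\rho$ on $\mathbb{C}^M\otimes\mathbb{C}^N$ let $\rho_B=\mathrm{Tr}_A(\rho)$. A unitary $U^B$ on $\mathbb{C}^N$ is called cyclic (locally noneffective) for $\rho$ if $[\rho_B,U^B]=0$. Set $\rho_f=(I\otimes U^B)\rho(I\otimes U^{B\dagger})$ and define the Fu distance $d(\rho,U^B)=\frac{1}{\sqrt2}\|\rho-\rho_f\|_F$, where $\|X\|_F=\sqrt{\mathrm{Tr}(X^\dagger X)}$ is the Frobenius norm. Define $d_{\max}(\rho)=\max\{d(\rho,U^B): U^B \text{ unitary on } \mathbb{C}^N,\ [\rho_B,U^B]=0\}$. *)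

(* Defs.v *)
From HB Require Import structures.
From mathcomp Require Import all_boot all_order all_algebra.
From mathcomp Require Import complex mxtens.
Set Implicit Arguments. Unset Strict Implicit. Unset Printing Implicit Defensive.
Import Order.TTheory GRing.Theory Num.Theory.
Local Open Scope ring_scope.
Local Open Scope complex_scope.

Section QDefs.
Variable R : rcfType.
Local Notation C := R[i].

Definition adjmx {m n} (A : 'M[C]_(m, n)) : 'M[C]_(n, m) := (map_mx conjc A)^T.

Definition unitary {n} (U : 'M[C]_n) : Prop := U *m adjmx U = 1%:M.

Definition frob {n} (X : 'M[C]_n) : C := sqrtC (\tr (adjmx X *m X)).

(* partial trace over the first factor A of C^M (x) C^N
   (row-major tensor indexing, as in [tensmx]) *)
Definition ptraceA {M N} (rho : 'M[C]_(M * N)) : 'M[C]_N :=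
  \matrix_(j, l) \sum_(i < M) rho (mxtens_index (i, j)) (mxtens_index (i, l)).

Definition fu_dist {M N} (rho : 'M[C]_(M * N)) (U : 'M[C]_N) : C :=
  let W : 'M[C]_(M * N) := (1%:M : 'M[C]_M) *t U in
  frob (rho - W *m rho *m adjmx W) / sqrtC 2.

Definition cyclic_for {M N} (rho : 'M[C]_(M * N)) (U : 'M[C]_N) : Prop :=
  unitary U /\ ptraceA rho *m U = U *m ptraceA rho.

Definition is_dmax {M N} (rho : 'M[C]_(M * N)) (v : C) : Prop :=
  (exists U, cyclic_for rho U /\ fu_dist rho U = v) /\
  (forall U, cyclic_for rho U -> fu_dist rho U <= v).

(* the vector sum_k a_k |e_k>_A (x) |f_k>_B, with e_k = column k of EA,
   f_k = column k of EB *)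
Definition schmidt_vec {M N} (a : 'I_N -> R) (EA : 'M[C]_(M, N)) (EB : 'M[C]_N)
  : 'cV[C]_(M * N) :=
  \sum_(k < N) (a k)%:C *: (col k EA *t col k EB).

Definition iso_state {M N} (eps : R) (psi : 'cV[C]_(M * N)) : 'M[C]_(M * N) :=
  eps%:C *: (psi *m adjmx psi) + ((1 - eps) / (M * N)%:R)%:C *: 1%:M.

End QDefs.

(* Main.v *)
Require Import Defs.
From HB Require Import structures.
From mathcomp Require Import all_boot all_order all_algebra.
From mathcomp Require Import complex mxtens.
From mathcomp Require Import ring lra.
Import Order.TTheory GRing.Theory Num.Theory.
Local Open Scope ring_scope.
Local Open Scope complex_scope.
Set Implicit Arguments. Unset Strict Implicit. Unset Printing Implicit Defensive.
Section A.
Variable R : rcfType.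
Local Notation C := R[i].

Lemma adjmxK m n (A : 'M[C]_(m, n)) : adjmx (adjmx A) = A.
Proof. by apply/matrixP=> i j; rewrite !mxE conjcK. Qed.

Lemma adjmx_mul m n p (A : 'M[C]_(m, n)) (B : 'M[C]_(n, p)) :
  adjmx (A *m B) = adjmx B *m adjmx A.
Proof. by rewrite /adjmx map_mxM trmx_mul. Qed.

Lemma adjmxD m n (A B : 'M[C]_(m, n)) : adjmx (A + B) = adjmx A + adjmx B.
Proof. by rewrite /adjmx map_mxD linearD. Qed.

Lemma adjmxN m n (A : 'M[C]_(m, n)) : adjmx (- A) = - adjmx A.
Proof. by rewrite /adjmx map_mxN linearN. Qed.

Lemma adjmxB m n (A B : 'M[C]_(m, n)) : adjmx (A - B) = adjmx A - adjmx B.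
Proof. by rewrite adjmxD adjmxN. Qed.

Lemma adjmxZ m n c (A : 'M[C]_(m, n)) : adjmx (c *: A) = c^* *: adjmx A.
Proof. by rewrite /adjmx map_mxZ linearZ. Qed.

Lemma adjmx1 n : adjmx (1%:M : 'M[C]_n) = 1%:M.
Proof. by rewrite /adjmx map_mx1 trmx1. Qed.

Lemma adjmxE m n (A : 'M[C]_(m, n)) i j : adjmx A i j = (A j i)^*.
Proof. by rewrite !mxE. Qed.

Lemma adjmx_tens m n p q (A : 'M[C]_(m, n)) (B : 'M[C]_(p, q)) :
  adjmx (A *t B) = adjmx A *t adjmx B.
Proof. by apply/matrixP=> i j; rewrite !mxE rmorphM. Qed.

Lemma tens11 m n : (1%:M : 'M[C]_m) *t (1%:M : 'M[C]_n) = 1%:M.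
Proof.
apply/matrixP=> i j.
case: (mxtens_indexP i)=> i1 i2; case: (mxtens_indexP j)=> j1 j2.
rewrite tensmxE !mxE (inj_eq (can_inj (@mxtens_indexK m n))) xpair_eqE.
by case: (i1 == j1); case: (i2 == j2); rewrite /= ?mulr1 ?mulr0.
Qed.

Lemma adjmx_diag n (d : 'rV[R]_n) :
  adjmx (diag_mx (map_mx (real_complex R) d)) = diag_mx (map_mx (real_complex R) d).
Proof.
apply/matrixP=> i j; rewrite !mxE rmorphMn /= eq_sym oppr0.
by have [->|ne] := eqVneq i j; rewrite ?mulr0n.
Qed.

End A.
Section A.
Variable R : rcfType.
Local Notation C := R[i].

Lemma sum_tens m n (F : 'I_(m*n) -> C) :
  \sum_p F p = \sum_(i < m) \sum_(j < n) F (mxtens_index (i,j)).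
Proof.
rewrite pair_big /=; apply: reindex.
exists (@mxtens_unindex m n)=> k _; first by rewrite -surjective_pairing mxtens_indexK.
by rewrite -surjective_pairing mxtens_unindexK.
Qed.

Definition matv m n (x : 'cV[C]_(m*n)) : 'M[C]_(m,n) :=
  \matrix_(i,j) x (mxtens_index (i,j)) 0.

Lemma W_entry m n (U : 'M[C]_n) i j i' j' :
  ((1%:M : 'M[C]_m) *t U) (mxtens_index (i,j)) (mxtens_index (i',j')) =
  (i == i')%:R * U j j'.
Proof. by rewrite tensmxE mxE. Qed.

Lemma R2 m n (x y : 'cV[C]_(m*n)) (U : 'M[C]_n) :
  (adjmx x *m ((1%:M : 'M[C]_m) *t U) *m y) 0 0 =
  \tr (adjmx (matv x) *m matv y *m U^T).
Proof.
transitivity (\sum_(i < m) \sum_(j < n) \sum_(k < n)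
   (x (mxtens_index (i,j)) 0)^* * U j k * y (mxtens_index (i,k)) 0).
  rewrite mxE sum_tens; apply: eq_bigr=> i _.
  rewrite exchange_big /=; apply: eq_bigr=> k _.
  rewrite mxE sum_tens (bigD1 i) //= [X in _ + X]big1 ?addr0; last first.
    move=> i' ne; rewrite big1 ?mul0r // => j _.
    by rewrite W_entry !mxE (negPf ne) mul0r mulr0.
  rewrite mulr_suml; apply: eq_bigr=> j _.
  by rewrite W_entry !mxE eqxx mul1r.
rewrite /mxtrace exchange_big /=; apply: eq_bigr=> j _.
rewrite mxE exchange_big /=; apply: eq_bigr=> k _.
rewrite !mxE mulr_suml; apply: eq_bigr=> i _.
by rewrite !mxE mulrAC.
Qed.


Lemma ptraceA_outer m n (x y : 'cV[C]_(m*n)) :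
  ptraceA (x *m adjmx y) = (matv x)^T *m map_mx conjc (matv y).
Proof.
apply/matrixP=> j l; rewrite !mxE; apply: eq_bigr=> i _.
by rewrite !mxE big_ord1 !mxE.
Qed.

Lemma ptraceAD m n (A B : 'M[C]_(m*n)) : ptraceA (A + B) = ptraceA A + ptraceA B.
Proof. by apply/matrixP=> j l; rewrite !mxE -big_split; apply: eq_bigr=> i _; rewrite mxE. Qed.

Lemma ptraceAZ m n c (A : 'M[C]_(m*n)) : ptraceA (c *: A) = c *: ptraceA A.
Proof. by apply/matrixP=> j l; rewrite !mxE mulr_sumr; apply: eq_bigr=> i _; rewrite mxE. Qed.

Lemma ptraceA1 m n : ptraceA (1%:M : 'M[C]_(m*n)) = (m%:R : C) *: 1%:M.
Proof.
apply/matrixP=> j l; rewrite !mxE.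
under eq_bigr do rewrite mxE (inj_eq (can_inj (@mxtens_indexK m n))) xpair_eqE eqxx /=.
by rewrite sumr_const card_ord mulr_natl.
Qed.

Lemma adjmx_diagR n (f : 'I_n -> R) :
  adjmx (diag_mx (\row_k (f k)%:C)) = diag_mx (\row_k (f k)%:C).
Proof.
apply/matrixP=> i j; rewrite !mxE rmorphMn /= eq_sym oppr0.
by have [->|ne] := eqVneq i j; rewrite ?mulr0n.
Qed.

Lemma schmidt_entry M N (a : 'I_N -> R) (EA : 'M[C]_(M, N)) (EB : 'M[C]_N) i j :
  schmidt_vec a EA EB (mxtens_index (i,j)) 0 = \sum_k (a k)%:C * (EA i k * EB j k).
Proof.
rewrite /schmidt_vec summxE; apply: eq_bigr=> k _.
by rewrite !mxE mxtens_indexK.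
Qed.

Lemma matv_schmidt M N (a : 'I_N -> R) (EA : 'M[C]_(M, N)) (EB : 'M[C]_N) :
  matv (schmidt_vec a EA EB) = EA *m diag_mx (\row_k (a k)%:C) *m EB^T.
Proof.
apply/matrixP=> i j; rewrite !mxE schmidt_entry; apply: eq_bigr=> k _.
by rewrite mul_mx_diag !mxE mulrCA mulrA.
Qed.

End A.
Section B.
Variable R : rcfType.
Local Notation C := R[i].
Variables (M N : nat) (eps : R) (a : 'I_N -> R) (EA : 'M[C]_(M,N)) (EB : 'M[C]_N).
Hypothesis hEA : adjmx EA *m EA = 1%:M.
Hypothesis hEB : adjmx EB *m EB = 1%:M.
Hypothesis hsum : \sum_k a k ^+ 2 = 1.

Let psi := schmidt_vec a EA EB.
Let Da := diag_mx (\row_k (a k)%:C).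
Definition Lam := diag_mx (\row_k (a k ^+ 2)%:C).
Definition Dm := EB *m Lam *m adjmx EB.
Definition Vm (U : 'M[C]_N) := adjmx EB *m U *m EB.
Definition sv (U : 'M[C]_N) := (adjmx psi *m ((1%:M : 'M[C]_M) *t U) *m psi) 0 0.

Lemma hEB' : EB *m adjmx EB = 1%:M.
Proof. exact: mulmx1C. Qed.

Lemma DaDa : Da *m Da = Lam.
Proof. by rewrite mulmx_diag; congr diag_mx; apply/rowP=> k; rewrite !mxE -rmorphM expr2. Qed.

Lemma adjT n (A : 'M[C]_n) : adjmx (A^T) = map_mx conjc A.
Proof. by rewrite /adjmx map_trmx trmxK. Qed.

Lemma L3 : adjmx (matv psi) *m matv psi = map_mx conjc EB *m Lam *m EB^T.
Proof.
rewrite matv_schmidt !adjmx_mul adjmx_diagR adjT -/Da.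
rewrite -!mulmxA (mulmxA (adjmx EA)) hEA mul1mx !mulmxA.
by rewrite -(mulmxA _ Da Da) DaDa.
Qed.

Lemma L4 U : sv U = \sum_k (a k ^+ 2)%:C * Vm U k k.
Proof.
rewrite /sv R2 L3 -!mulmxA mxtrace_mulC !mulmxA -(mulmxA Lam) -(mulmxA Lam).
have -> : EB^T *m U^T *m map_mx conjc EB = (Vm U)^T.
  by rewrite /Vm !trmx_mul /adjmx trmxK mulmxA.
rewrite /mxtrace; apply: eq_bigr=> k _.
by rewrite mul_diag_mx !mxE.
Qed.

Lemma Vm1 : Vm 1%:M = 1%:M.
Proof. by rewrite /Vm mulmx1 hEB. Qed.

Lemma psi_norm : adjmx psi *m psi = 1%:M.
Proof.
apply/matrixP=> i j; rewrite !ord1.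
have := L4 1%:M; rewrite /sv tens11 mulmx1 => ->.
rewrite Vm1 mxE /=.
under eq_bigr do rewrite mxE eqxx mulr1.
by rewrite -rmorph_sum hsum.
Qed.

Lemma L6 : ptraceA (psi *m adjmx psi) = Dm.
Proof.
rewrite ptraceA_outer matv_schmidt !trmx_mul !map_mxM tr_diag_mx.
have -> : map_mx conjc Da = Da.
  by have := congr1 trmx (adjmx_diagR a); rewrite /adjmx trmxK tr_diag_mx.
rewrite trmxK !mulmxA -(mulmxA (EB *m Da) EA^T).
have -> : EA^T *m map_mx conjc EA = 1%:M.
  by rewrite -[map_mx _ EA]trmxK -trmx_mul hEA trmx1.
rewrite mulmx1 -map_trmx /Dm -DaDa mulmxA.
by [].
Qed.


Lemma L7 : ptraceA (iso_state eps psi) =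
  eps%:C *: Dm + (((1 - eps) / (M * N)%:R)%:C * M%:R) *: 1%:M.
Proof.
by rewrite /iso_state ptraceAD !ptraceAZ L6 ptraceA1 scalerA.
Qed.

Lemma L8 (U : 'M[C]_N) : eps != 0 ->
  cyclic_for (iso_state eps psi) U <-> unitary U /\ Dm *m U = U *m Dm.
Proof.
move=> e0; rewrite /cyclic_for L7 mulmxDl mulmxDr -!scalemxAl -!scalemxAr.
rewrite mul1mx mulmx1.
split=> -[uU h]; split=> //.
  move/addIr: h; apply: scalerI; by apply: contra e0 => /eqP[->].
by rewrite h.
Qed.


Lemma trace_outer2 n (u v x y : 'cV[C]_n) :
  \tr (u *m adjmx v *m (x *m adjmx y)) = (adjmx v *m x) 0 0 * (adjmx y *m u) 0 0.
Proof.
rewrite -mulmxA mxtrace_mulC trace_mx11 !mulmxA -(mulmxA _ (adjmx y)).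
by rewrite mxE big_ord1.
Qed.

Lemma adj11 (A : 'M[C]_1) : adjmx A 0 0 = (A 0 0)^*.
Proof. by rewrite !mxE. Qed.

Lemma L9 (U : 'M[C]_N) : unitary U ->
  fu_dist (iso_state eps psi) U =
  sqrtC (eps%:C ^+ 2 * (2 - 2 * (sv U * (sv U)^*))) / sqrtC 2.
Proof.
move=> uU; rewrite /fu_dist /frob; congr (sqrtC _ / _).
set W := (1%:M : 'M[C]_M) *t U.
have WW : W *m adjmx W = 1%:M.
  by rewrite /W adjmx_tens adjmx1 tensmx_mul mulmx1 uU tens11.
have WW' : adjmx W *m W = 1%:M by apply: mulmx1C.
set phi := W *m psi.
have eQ : W *m (psi *m adjmx psi) *m adjmx W = phi *m adjmx phi.
  by rewrite /phi adjmx_mul !mulmxA.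
have -> : iso_state eps psi - W *m iso_state eps psi *m adjmx W =
    eps%:C *: (psi *m adjmx psi - phi *m adjmx phi).
  rewrite /iso_state mulmxDr mulmxDl -!scalemxAr -!scalemxAl mulmx1 eQ WW.
  by rewrite scalerBr opprD addrACA subrr addr0.
rewrite adjmxZ.
rewrite [X in X *: adjmx _](_ : _ = eps%:C); last by apply: conj_Creal; rewrite complex_real.
have hP (v : 'cV[C]_(M * N)) : adjmx (v *m adjmx v) = v *m adjmx v.
  by rewrite adjmx_mul adjmxK.
rewrite adjmxB !hP.
rewrite -scalemxAl -scalemxAr scalerA -expr2 mxtraceZ.
congr (_ * _).
rewrite mulmxBl !mulmxBr !raddfB /= !trace_outer2.
have pp : (adjmx psi *m psi) 0 0 = 1 by rewrite psi_norm mxE.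
have ff : (adjmx phi *m phi) 0 0 = 1.
  by rewrite /phi adjmx_mul mulmxA -(mulmxA _ (adjmx W)) WW' mulmx1 pp.
have pf : (adjmx psi *m phi) 0 0 = sv U by rewrite /sv /phi mulmxA.
have fp : (adjmx phi *m psi) 0 0 = (sv U)^*.
  by rewrite -pf -adj11 adjmx_mul adjmxK.
rewrite pp ff pf fp.
rewrite mulrC; ring.
Qed.


Lemma L10 (e q : C) : 0 <= e -> 0 <= 1 - q ->
  sqrtC (e ^+ 2 * (2 - 2 * q)) / sqrtC 2 = e * sqrtC (1 - q).
Proof.
move=> he hq.
have -> : e ^+ 2 * (2 - 2 * q) = 2 * (e ^+ 2 * (1 - q)) by ring.
rewrite sqrtCM ?nnegrE ?mulr_ge0 ?exprn_ge0 ?ler0n //.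
rewrite sqrtCM ?nnegrE ?exprn_ge0 // sqrCK // [sqrtC 2 * _]mulrC mulfK //.
by rewrite sqrtC_eq0 pnatr_eq0.
Qed.

Lemma rownorm n (V : 'M[C]_n) k : V *m adjmx V = 1%:M ->
  \sum_j V k j * (V k j)^*%C = 1.
Proof.
move/matrixP/(_ k k); rewrite !mxE eqxx /= => h.
transitivity (\sum_j V k j * adjmx V j k); last exact: h.
by apply: eq_bigr=> j _; rewrite !mxE.
Qed.

Lemma entry_le1 n (V : 'M[C]_n) k j : V *m adjmx V = 1%:M -> `|V k j| <= 1.
Proof.
move=> hV; have h := rownorm k hV.
have : `|V k j| ^+ 2 <= 1.
  rewrite sqr_normc -h (bigD1 j) //= lerDl.
  by apply: sumr_ge0=> i _; apply: mulcJ_ge0.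
by rewrite -[X in _ <= X](expr1n _ 2) ler_pXn2r ?nnegrE.
Qed.

Lemma Vunit U : unitary U -> Vm U *m adjmx (Vm U) = 1%:M.
Proof.
move=> uU; rewrite /Vm !adjmx_mul adjmxK !mulmxA -(mulmxA _ EB) hEB' mulmx1.
by rewrite -(mulmxA _ U) uU mulmx1 hEB.
Qed.

Lemma lam_ge0 k : 0 <= (a k ^+ 2)%:C :> C.
Proof. by rewrite lecR sqr_ge0. Qed.

Lemma lam_sum : \sum_k (a k ^+ 2)%:C = 1 :> C.
Proof. by rewrite -rmorph_sum hsum. Qed.

Lemma sv_le1 U : unitary U -> `|sv U| <= 1.
Proof.
move=> uU; rewrite L4; apply: le_trans (ler_norm_sum _ _ _) _.
rewrite -lam_sum; apply: ler_sum=> k _.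
rewrite normrM ger0_norm ?lam_ge0 // ler_piMr ?lam_ge0 //.
exact: entry_le1 (Vunit uU).
Qed.

Lemma one_sub_ge0 U : unitary U -> 0 <= 1 - sv U * (sv U)^*%C.
Proof.
move=> uU; rewrite subr_ge0 -sqr_normc; apply: exprn_ile1 => //.
exact: sv_le1.
Qed.


Lemma LamV U : Dm *m U = U *m Dm -> Lam *m Vm U = Vm U *m Lam.
Proof.
move=> hc.
have eL : Lam = adjmx EB *m Dm *m EB.
  by rewrite /Dm !mulmxA hEB mul1mx -mulmxA hEB mulmx1.
rewrite /Vm; move: hc eL; move: Dm => D hc eL.
have e1 : Lam *m (adjmx EB *m U *m EB) = adjmx EB *m (D *m U) *m EB.
  rewrite {1}eL -!mulmxA; congr (_ *m _); congr (_ *m _).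
  by rewrite !mulmxA hEB' mul1mx.
have e2 : (adjmx EB *m U *m EB) *m Lam = adjmx EB *m (U *m D) *m EB.
  rewrite eL -!mulmxA; congr (_ *m _); congr (_ *m _).
  by rewrite !mulmxA hEB' mul1mx.
by rewrite e1 e2 hc.
Qed.

Lemma lower_bound U m : unitary U -> Dm *m U = U *m Dm ->
  (forall k, a k <= a m) -> 1 / 2 < a m ^+ 2 ->
  (2 * a m ^+ 2 - 1)%:C <= `|sv U|.
Proof.
move=> uU hc hmax hm.
have hV := Vunit uU; set V := Vm U in hV *.
have hk k : k != m -> a k ^+ 2 < a m ^+ 2.
  move=> ne.
  have : a m ^+ 2 + a k ^+ 2 <= 1.
    rewrite -hsum (bigD1 m) //= lerD2l (bigD1 k) //= lerDl.
    by apply: sumr_ge0=> i _; apply: sqr_ge0.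
  move=> h; apply: (@lt_le_trans _ _ (1 / 2)) => //; last exact: ltW.
  lra.
have V0 k : k != m -> V m k = 0.
  move=> ne; have := congr1 (fun X : 'M[C]_N => X m k) (LamV hc).
  rewrite mul_diag_mx mul_mx_diag !mxE -/(Vm U) -/V => /eqP.
  rewrite mulrC -subr_eq0 -mulrBr mulf_eq0 => /orP[/eqP //|].
  rewrite subr_eq0 => /eqP/complexI/eqP; by rewrite eq_sym lt_eqF ?hk.
have Vmm : `|V m m| = 1.
  have := rownorm m hV; rewrite (bigD1 m) //= big1 ?addr0; last first.
    by move=> k ne; rewrite V0 // mul0r.
  rewrite -sqr_normc => /eqP; rewrite sqrf_eq1 => /orP[/eqP //|/eqP h].
  by have := normr_ge0 (V m m); rewrite h ler0N1.
rewrite L4 -/V (bigD1 m) //=.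
apply: le_trans (lerB_normD _ _).
rewrite normrM ger0_norm ?lam_ge0 // Vmm mulr1.
have hr : `|\sum_(k | k != m) (a k ^+ 2)%:C * V k k| <= 1 - (a m ^+ 2)%:C.
  apply: le_trans (ler_norm_sum _ _ _) _.
  have -> : 1 - (a m ^+ 2)%:C = \sum_(k | k != m) (a k ^+ 2)%:C.
    by rewrite -lam_sum (bigD1 m) //= addrC addrK.
  apply: ler_sum=> k _.
  rewrite normrM ger0_norm ?lam_ge0 // ler_piMr ?lam_ge0 //.
  exact: entry_le1 hV.
apply: le_trans (lerB (lexx _) hr).
rewrite le_eqVlt; apply/orP; left; apply/eqP.
rewrite rmorphB rmorphM rmorph1 rmorph_nat; ring.
Qed.


Definition Ud (p : 'rV[C]_N) := EB *m diag_mx p *m adjmx EB.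

Lemma adj_diag n (p : 'rV[C]_n) : adjmx (diag_mx p) = diag_mx (map_mx conjc p).
Proof.
apply/matrixP=> i j; rewrite !mxE rmorphMn /= eq_sym.
by have [->|ne] := eqVneq i j; rewrite ?mulr0n ?mulr1n.
Qed.

Lemma Ud_unitary (p : 'rV[C]_N) : (forall k, p 0 k * (p 0 k)^*%C = 1) -> unitary (Ud p).
Proof.
move=> hp; rewrite /unitary /Ud !adjmx_mul adjmxK !mulmxA.
rewrite -(mulmxA _ (adjmx EB) EB) hEB mulmx1 adj_diag -(mulmxA EB) mulmx_diag.
have -> : diag_mx (\row_j (p 0 j * map_mx conjc p 0 j)) = 1%:M.
  by apply/matrixP=> i j; rewrite !mxE hp.
by rewrite mulmx1 hEB'.
Qed.

Lemma Ud_comm (p : 'rV[C]_N) : Dm *m Ud p = Ud p *m Dm.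
Proof.
rewrite /Dm /Ud !mulmxA -(mulmxA _ (adjmx EB) EB) hEB mulmx1.
rewrite -(mulmxA EB Lam) /Lam diag_mxC -/Lam.
by rewrite -(mulmxA _ (adjmx EB) EB) hEB mulmx1 !mulmxA.
Qed.

Lemma sv_Ud (p : 'rV[C]_N) : sv (Ud p) = \sum_k (a k ^+ 2)%:C * p 0 k.
Proof.
rewrite L4 /Vm /Ud !mulmxA hEB mul1mx -mulmxA hEB mulmx1.
by apply: eq_bigr=> k _; rewrite mxE eqxx mulr1n.
Qed.

End B.
Section C.
Variable R : rcfType.
Lemma cmul (a b c d : R) : (a +i* b) * (c +i* d) = (a * c - b * d) +i* (a * d + b * c).
Proof. by []. Qed.
Lemma cadd (a b c d : R) : (a +i* b) + (c +i* d) = (a + c) +i* (b + d).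
Proof. by []. Qed.
Lemma cconj (a b : R) : (a +i* b)^*%C = a +i* (- b).
Proof. by []. Qed.
Lemma cnorm (a b : R) : (a +i* b) * (a +i* b)^*%C = (a ^+ 2 + b ^+ 2)%:C.
Proof. rewrite cconj cmul; congr Complex; ring. Qed.
Lemma cR (a : R) : a%:C = a +i* 0. Proof. by []. Qed.
Lemma copp (a b : R) : - (a +i* b) = (- a) +i* (- b). Proof. by []. Qed.

Lemma normsq_eq0 (z : R[i]) : z * z^*%C = 0 -> z = 0.
Proof. by rewrite -sqr_normc => /eqP; rewrite expf_eq0 /= normr_eq0 => /eqP. Qed.

Lemma triangle (A B Cc : R) : 0 <= A -> 0 <= B -> 0 <= Cc -> A + B + Cc = 1 ->
  A <= 1 / 2 -> B <= 1 / 2 -> Cc <= 1 / 2 ->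
  exists v w : R[i], [/\ v * v^*%C = 1, w * w^*%C = 1 &
    A%:C + B%:C * v + Cc%:C * w = 0].
Proof.
move=> hA hB hC hs hA2 hB2 hC2.
pose num := Cc ^+ 2 - A ^+ 2 - B ^+ 2.
pose x := num / (2 * (A * B)).
have hx : x ^+ 2 <= 1.
  have [hAB|hAB] := eqVneq (A * B) 0.
    by rewrite /x hAB mulr0 invr0 mulr0 expr0n /= ler01.
  have pAB : 0 < A * B by rewrite lt_def hAB mulr_ge0.
  have d0 : 0 < (2 * (A * B)) ^+ 2 by rewrite exprn_gt0 // mulr_gt0.
  rewrite /x expr_div_n ler_pdivrMr // mul1r.
  have e : (2 * (A * B)) ^+ 2 - num ^+ 2 = (1 - 2 * Cc) * (1 - 2 * A) * (1 - 2 * B).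
    rewrite /num; have -> : Cc = 1 - A - B by lra.
    ring.
  rewrite -subr_ge0 e; apply: mulr_ge0; first apply: mulr_ge0; lra.
pose y := Num.sqrt (1 - x ^+ 2).
have hy : y ^+ 2 = 1 - x ^+ 2 by rewrite sqr_sqrtr // subr_ge0.
have key : A ^+ 2 + 2 * A * B * x + B ^+ 2 = Cc ^+ 2.
  have [hAB|hAB] := eqVneq (A * B) 0.
    have -> : x = 0 by rewrite /x hAB mulr0 invr0 mulr0.
    move/eqP: hAB; rewrite mulf_eq0 => /orP[/eqP h0|/eqP h0].
      have -> : B = Cc by lra.
      by rewrite h0; ring.
    have -> : A = Cc by lra.
    by rewrite h0; ring.
  have -> : 2 * A * B * x = num by rewrite /x -[2 * A * B]mulrA mulrC divfK // mulf_neq0 ?pnatr_eq0.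
  rewrite /num; ring.
pose z : R[i] := (A + B * x) +i* (B * y).
have ez : A%:C + B%:C * (x +i* y) = z.
  by rewrite /z !cR cmul cadd; congr Complex; ring.
have zz : z * z^*%C = (Cc ^+ 2)%:C.
  rewrite cnorm; congr real_complex_def.
  rewrite exprMn hy -key; ring.
exists (x +i* y), (if Cc == 0 then 1 else - z / Cc%:C); split.
- by rewrite cnorm hy addrC subrK.
- have [c0|c0] := eqVneq Cc 0; first by rewrite conjc1 mulr1.
  rewrite rmorphM rmorphN mulrACA mulrNN zz.
  rewrite -[complex_conjc__canonical__GRing_RMorphism R _]/(conjc _) conjc_inv conjc_real.
  rewrite -invfM -rmorphM -expr2 divff //.
  by rewrite (inj_eq (@complexI R)) expf_neq0.
- rewrite ez; have [c0|c0] := eqVneq Cc 0.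
    rewrite c0 mul0r addr0; apply: normsq_eq0; by rewrite zz c0 expr0n.
  rewrite mulrC divrK ?addrN //.
  by apply: contra c0 => /eqP[->].
Qed.


Lemma split3 n (F : 'I_n -> R[i]) (j : 'I_n) :
  \sum_k F k = \sum_(k : 'I_n | (k < j)%N) F k + F j + \sum_(k : 'I_n | (j < k)%N) F k.
Proof.
rewrite (bigID (fun k : 'I_n => (k < j)%N)) /= -addrA; congr (_ + _).
rewrite (bigD1 j) /= ?ltnn //; congr (_ + _).
apply: eq_bigl=> k; rewrite -val_eqE /=.
by case: ltngtP.
Qed.

Lemma split3R n (F : 'I_n -> R) (j : 'I_n) :
  \sum_k F k = \sum_(k : 'I_n | (k < j)%N) F k + F j + \sum_(k : 'I_n | (j < k)%N) F k.
Proof.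
rewrite (bigID (fun k : 'I_n => (k < j)%N)) /= -addrA; congr (_ + _).
rewrite (bigD1 j) /= ?ltnn //; congr (_ + _).
apply: eq_bigl=> k; rewrite -val_eqE /=.
by case: ltngtP.
Qed.


Lemma phases n (l : 'I_n -> R) : (0 < n)%N -> (forall k, 0 <= l k) ->
  \sum_k l k = 1 -> (forall k, l k <= 1 / 2) ->
  exists p : 'rV[R[i]]_n, (forall k, p 0 k * (p 0 k)^*%C = 1) /\
    \sum_k (l k)%:C * p 0 k = 0.
Proof.
move=> n0 hl hs hh.
pose S (j : 'I_n) := \sum_(k : 'I_n | (k < j)%N) l k.
pose i0 := Ordinal n0.
have P0 : S i0 <= 1 / 2.
  rewrite /S big1 ?divr_ge0 ?ler01 ?ler0n //.
case: (@arg_maxnP _ i0 (fun j => S j <= 1 / 2) (fun j : 'I_n => val j) P0) => j Pj jmax.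
pose A := S j; pose B := l j; pose Cc := \sum_(k : 'I_n | (j < k)%N) l k.
have h3 : A + B + Cc = 1 by rewrite -hs (split3R _ j).
have hA : 0 <= A by apply: sumr_ge0.
have hC : 0 <= Cc by apply: sumr_ge0.
have hC2 : Cc <= 1 / 2.
  case: (ltnP j.+1 n) => hj.
    pose j' := Ordinal hj.
    have nP : ~~ (S j' <= 1 / 2).
      by apply/negP => hP; have := jmax j' hP; rewrite /= ltnn.
    have eS : S j' = A + B.
      rewrite /S (bigD1 j) //= addrC; congr (_ + _).
      apply: eq_bigl=> k; rewrite -val_eqE /=.
      by rewrite ltnS; case: ltngtP.
    move: nP; rewrite eS -ltNge => h; lra.
  rewrite /Cc big1 ?divr_ge0 ?ler01 ?ler0n // => k hk.
  by have := ltn_ord k; rewrite ltnNge (leq_trans hj hk).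
have [v [w [hv hw he]]] := triangle hA (hl j) hC h3 Pj (hh j) hC2.
pose p : 'rV[R[i]]_n := \row_k (if (k < j)%N then 1 else if k == j then v else w).
exists p; split.
  move=> k; rewrite mxE; case: ifP => _; first by rewrite conjc1 mulr1.
  by case: ifP.
have e1 : \sum_(k : 'I_n | (k < j)%N) (l k)%:C * p 0 k = A%:C.
  rewrite /A /S rmorph_sum; apply: eq_bigr=> k hk.
  by rewrite mxE hk mulr1.
have e2 : (l j)%:C * p 0 j = B%:C * v by rewrite mxE ltnn eqxx.
have e3 : \sum_(k : 'I_n | (j < k)%N) (l k)%:C * p 0 k = Cc%:C * w.
  rewrite /Cc rmorph_sum mulr_suml; apply: eq_bigr=> k hk.
  rewrite mxE ltnNge (ltnW hk) /=.
  by rewrite -val_eqE /= gtn_eqF.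
by rewrite (split3 _ j) e1 e2 e3.
Qed.

End C.

Unset Implicit Arguments.

Lemma cj (R : rcfType) (x : R[i]) : (x^*)%R = (x^*)%C.
Proof. by []. Qed.

Theorem theorem1 (R : rcfType) (M N : nat) (eps : R) (a : 'I_N -> R)
    (EA : 'M[R[i]]_(M, N)) (EB : 'M[R[i]]_N) :
  (N <= M)%N -> (1 <= N)%N ->
  0 < eps -> eps <= 1 ->
  (forall k, 0 <= a k) -> \sum_(k < N) a k ^+ 2 = 1 ->
  adjmx EA *m EA = 1%:M -> adjmx EB *m EB = 1%:M ->
  let am := \big[Num.max/0]_(k < N) a k in
  is_dmax (iso_state eps (schmidt_vec a EA EB))
    (if am ^+ 2 <= 1 / 2 then eps%:C
     else (2 * eps * am * Num.sqrt (1 - am ^+ 2))%:C).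
Proof.
move=> hNM hN1 he0 he1 ha hs hEA hEB am.
have [m _ hm] := @eq_bigmax _ _ _ 0 (Ordinal hN1) predT a erefl (fun i _ => ha i).
have ham : am = a m by rewrite /am -hm.
have hmax k : a k <= a m by rewrite -ham /am; exact: le_bigmax.
have e0 : eps != 0 by rewrite gt_eqF.
have ee : 0 <= eps%:C :> R[i] by rewrite lecR ltW.
have fuE U : cyclic_for (iso_state eps (schmidt_vec a EA EB)) U ->
    fu_dist (iso_state eps (schmidt_vec a EA EB)) U =
    eps%:C * sqrtC (1 - sv a EA EB U * (sv a EA EB U)^*%C).
  move=> /(L8 a EB hEA U e0) [uU _].
  rewrite (L9 eps hEA hEB hs uU) L10 //.
  have := one_sub_ge0 hEA hEB hs uU; by rewrite -cj.
rewrite ham; case: ifP => hc.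
- split.
  + have hl : forall k, (a k ^+ 2) <= 1 / 2.
      move=> k; apply: le_trans hc; have := hmax k; have := ha k; nra.
    have [p [hp hp0]] := phases hN1 (fun k => sqr_ge0 (a k)) hs hl.
    have cU : cyclic_for (iso_state eps (schmidt_vec a EA EB)) (Ud EB p).
      apply/(L8 a EB hEA _ e0); split; first exact: Ud_unitary hEB _ hp.
      have := Ud_comm a hEB p. exact.
    exists (Ud EB p); split=> //.
    by rewrite fuE // sv_Ud // hp0 mul0r subr0 sqrtC1 mulr1.
  + move=> U cU; rewrite fuE //.
    apply: ler_piMr => //.
    have h1 : 0 <= 1 - sv a EA EB U * (sv a EA EB U)^*%C.
      case/(L8 a EB hEA U e0): cU => uU _; exact: (one_sub_ge0 hEA hEB hs uU).
    rewrite -[X in _ <= X]sqrtC1 ler_sqrtC ?nnegrE ?ler01 //.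
    by rewrite lerBlDr lerDl mulcJ_ge0.
- have hm2 : 1 / 2 < a m ^+ 2 by rewrite ltNge hc.
  have hm1 : a m ^+ 2 <= 1.
    rewrite -hs (bigD1 m) //= lerDl; apply: sumr_ge0=> k _; exact: sqr_ge0.
  pose c := 2 * a m ^+ 2 - 1.
  have hc0 : 0 <= c by rewrite /c; lra.
  pose x := 2 * a m * Num.sqrt (1 - a m ^+ 2).
  have hx0 : 0 <= x by rewrite /x mulr_ge0 ?sqrtr_ge0 // mulr_ge0.
  have ex : x ^+ 2 = 1 - c ^+ 2.
    rewrite /x /c !exprMn sqr_sqrtr ?subr_ge0 //; ring.
  have eT : (2 * eps * a m * Num.sqrt (1 - a m ^+ 2))%:C =
      eps%:C * sqrtC (1 - (c ^+ 2)%:C) :> R[i].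
    have -> : (1 - (c ^+ 2)%:C) = ((x%:C) ^+ 2 :> R[i]).
      by rewrite -rmorphXn ex rmorphB rmorph1.
    rewrite sqrCK ?lecR // -rmorphM /x; congr real_complex_def; ring.
  rewrite eT; split.
  + pose p : 'rV[R[i]]_N := \row_k (if k == m then -1 else 1).
    have hp k : p 0 k * (p 0 k)^*%C = 1.
      rewrite mxE; case: ifP => _; last by rewrite conjc1 mulr1.
      by rewrite -cj conj_Creal ?rpredN1 // mulrNN mulr1.
    have cU : cyclic_for (iso_state eps (schmidt_vec a EA EB)) (Ud EB p).
      apply/(L8 a EB hEA _ e0); split; first exact: Ud_unitary hEB _ hp.
      have := Ud_comm a hEB p. exact.
    exists (Ud EB p); split=> //.
    rewrite fuE // sv_Ud //.
    have -> : \sum_k (a k ^+ 2)%:C * p 0 k = - c%:C.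
      rewrite (bigD1 m) //= mxE eqxx mulrN1.
      have -> : \sum_(k | k != m) (a k ^+ 2)%:C * p 0 k = 1 - (a m ^+ 2)%:C.
        apply/esym; rewrite -(lam_sum hs) (bigD1 m) //= addrC addrK; apply/esym/eq_bigr=> k hk.
        by rewrite mxE (negPf hk) mulr1.
      rewrite /c (_ : 2 * a m ^+ 2 - 1 = a m * a m + a m * a m - 1); last by ring.
      rewrite !rmorphB !rmorphD !rmorphM !rmorph1; ring.
    by rewrite -cj conj_Creal ?rpredN ?complex_real // mulrNN -rmorphM -expr2.
  + move=> U cU; rewrite fuE //.
    have [uU hcU] := (L8 a EB hEA U e0).1 cU.
    apply: ler_wpM2l => //.
    have h1 := one_sub_ge0 hEA hEB hs uU.
    have h2 : 0 <= 1 - (c ^+ 2)%:C :> R[i].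
      have -> : (1 - (c ^+ 2)%:C) = ((1 - c ^+ 2)%:C : R[i]) by rewrite rmorphB rmorph1.
      by rewrite lecR -ex sqr_ge0.
    rewrite ler_sqrtC ?nnegrE //; apply: lerB => //; rewrite -sqr_normc rmorphXn.
    rewrite ler_pXn2r ?nnegrE ?normr_ge0 //; last by rewrite lecR.
    have := lower_bound hEA hEB hs uU hcU hmax hm2. exact.
Qed.
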